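(* Let $\beta\in[0,1)$ and let $u:\mathbb{T}_m\to\mathbb{R}$ satisfy $-\Delta_\beta u(x)\ge0$ for all $x\in\mathbb{T}_m$ and $\liminf_{x\to y}u(x)\ge0$ for every $y\in\partial\mathbb{T}_m$. Then $u(x)\ge0$ for all $x\in\mathbb{T}_m$. Moreover, if $\beta>0$, then either $u>0$ on $\mathbb{T}_m$ or $u\equiv0$ on $\mathbb{T}_m$.
   Context: Tree: for an integer $m\ge2$, $\mathbb{T}_m$ has vertices the root $\emptyset$ and all finite sequences $(\emptyset,a_1,\dots,a_k)$, $a_i\in\{0,\dots,m-1\}$; $|x|$ is the level, successors of $x$ are $(x,i)$, $\hat x$ is the immediate predecessor of $x\ne\emptyset$. A branch is an infinite sequence $(x_n)_{n\ge0}$ with $x_0=\emptyset$ and $x_{n+1}$ a successor of $x_n$; $\partial\mathbb{T}_m$ is the set of branches; for $y=(x_n)$, $\liminf_{x\to y}u(x)=\liminf_{n\to\infty}u(x_n)$. Operator: $p_\beta=1$ if $\beta=0$, $p_\beta=\beta/(1-\beta)$ if $\beta\in(0,1)$. $\Delta_\beta u(\emptyset)=\frac1m\sum_{i=0}^{m-1}u(\emptyset,i)-u(\emptyset)$ and, for $x\ne\emptyset$, $\Delta_\beta u(x)=\big(\beta u(\hat x)+\frac{1-\beta}{m}\sum_{i=0}^{m-1}u(x,i)-u(x)\big)p_\beta^{-|x|}$. *)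

(* Defs.v *)
From mathcomp Require Import all_boot all_order all_algebra.
From mathcomp Require Import all_classical all_reals all_analysis.
Set Implicit Arguments. Unset Strict Implicit. Unset Printing Implicit Defensive.
Import Order.TTheory GRing.Theory Num.Theory.
Local Open Scope ring_scope.

(* Encoding: the most recently appended digit is stored FIRST, so the
   vertex (root, a_1, ..., a_k) is represented by [:: a_k; ...; a_1]. *)
Definition vertex (m : nat) := seq 'I_m.

Definition root {m : nat} : vertex m := [::].
Definition succ {m : nat} (x : vertex m) (i : 'I_m) : vertex m := i :: x.
Definition level {m : nat} (x : vertex m) : nat := size x.
Definition pred_v {m : nat} (x : vertex m) : vertex m := behead x.

Definition pbeta {R : realType} (beta : R) : R :=
  if beta == 0 then 1 else beta / (1 - beta).

Definition Delta {R : realType} (m : nat) (beta : R) (u : vertex m -> R)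
  (x : vertex m) : R :=
  if x is [::] then
    (m%:R)^-1 * (\sum_(i < m) u (succ x i)) - u x
  else
    (beta * u (pred_v x) + (1 - beta) / m%:R * (\sum_(i < m) u (succ x i))
       - u x) / (pbeta beta) ^+ (level x).

Definition is_branch {m : nat} (b : nat -> vertex m) : Prop :=
  b 0%N = root /\ forall n, exists i : 'I_m, b n.+1 = succ (b n) i.

(* liminf_{x -> y} u(x) = liminf_n u(x_n), taken in the extended reals. *)
Definition liminf_branch {R : realType} {m : nat} (u : vertex m -> R)
  (b : nat -> vertex m) : \bar R :=
  limn_einf (fun n => (u (b n))%:E).

(* Main.v *)
Require Import Defs.
From mathcomp Require Import all_boot all_order all_algebra.
From mathcomp Require Import all_classical all_reals all_analysis.
From mathcomp Require Import lra.
Set Implicit Arguments. Unset Strict Implicit.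
Import Order.TTheory GRing.Theory Num.Theory.
Local Open Scope ring_scope.

Lemma pbeta_gt0 (R : realType) (beta : R) : 0 <= beta -> beta < 1 -> 0 < pbeta beta.
Proof.
rewrite /pbeta; case: eqP => [_|h] b0 b1 //.
apply: divr_gt0; last by rewrite subr_gt0.
by rewrite lt_neqAle eq_sym b0 andbT; apply/eqP.
Qed.

Lemma super_root (R : realType) (m : nat) (beta : R) (u : vertex m -> R)
  (hsuper : forall x : vertex m, 0 <= - @Delta R m beta u x) :
  (m%:R)^-1 * \sum_(i < m) u (i :: [::]) <= u [::].
Proof. by have := hsuper [::]; rewrite /Delta /succ oppr_ge0 subr_le0. Qed.

Lemma super_node (R : realType) (m : nat) (beta : R) (u : vertex m -> R)
  (hb0 : 0 <= beta) (hb1 : beta < 1)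
  (hsuper : forall x : vertex m, 0 <= - @Delta R m beta u x) a x :
  beta * u x + (1 - beta) * ((m%:R)^-1 * \sum_(i < m) u (i :: a :: x)) <= u (a :: x).
Proof.
have := hsuper (a :: x); rewrite /Delta oppr_ge0 pmulr_lle0; last first.
  by rewrite invr_gt0 exprn_gt0 // pbeta_gt0.
rewrite subr_le0 /pred_v /succ /= => h. by rewrite (mulrA (1 - beta)).
Qed.

Lemma exists_child (R : realType) (m : nat) (hm : (0 < m)%N) (u : vertex m -> R) x :
  exists i : 'I_m, u (i :: x) <= (m%:R)^-1 * \sum_(j < m) u (j :: x).
Proof.
set A := (m%:R)^-1 * _.
case: (pselect (exists i : 'I_m, u (i :: x) <= A)) => // H0; exfalso.
have H i : ~ (u (i :: x) <= A) by move=> h; apply: H0; exists i.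
have : \sum_(j < m) A < \sum_(j < m) u (j :: x).
  apply: ltr_sum; first by apply/hasP; exists (Ordinal hm) => //; rewrite mem_index_enum.
  by move=> i _; have := H i; rewrite ltNge => /negP.
rewrite /A sumr_const card_ord; set S := \sum_(j < m) _.
rewrite -mulrnAr -(mulr_natl S) mulrA mulVf ?mul1r ?ltxx //.
by rewrite pnatr_eq0 -lt0n.
Qed.

Definition goodv (R : realType) (m : nat) (u : vertex m -> R) (x : vertex m) :=
  x = [::] \/ u x <= u (behead x).

Lemma good_avg (R : realType) (m : nat) (beta : R) (u : vertex m -> R)
  (hb0 : 0 <= beta) (hb1 : beta < 1)
  (hsuper : forall x : vertex m, 0 <= - @Delta R m beta u x) x :
  goodv u x -> (m%:R)^-1 * \sum_(i < m) u (i :: x) <= u x.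
Proof.
case: x => [_|a x [//|/= h]]; first exact: super_root.
have := super_node hb0 hb1 hsuper a x.
set A := _ * \sum_(i < m) _ => h2.
have h3 : beta * u (a :: x) <= beta * u x by rewrite ler_wpM2l.
have h4 : (1 - beta) * A <= (1 - beta) * u (a :: x) by lra.
by rewrite ler_pM2l ?subr_gt0 in h4.
Qed.

Lemma good_anc (R : realType) (m : nat) (u : vertex m -> R) x :
  exists y, u y <= u x /\ goodv u y.
Proof.
elim: x => [|a x [y [h1 h2]]]; first by exists [::]; split => //; left.
case: (lerP (u (a :: x)) (u x)) => h.
  by exists (a :: x); split => //; right.
by exists y; split => //; apply: le_trans h1 (ltW h).
Qed.

Lemma part1 (R : realType) (m : nat) (hm : (2 <= m)%N) (beta : R)
  (hb0 : 0 <= beta) (hb1 : beta < 1) (u : vertex m -> R)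
  (hsuper : forall x : vertex m, 0 <= - @Delta R m beta u x)
  (hbd : forall b : nat -> vertex m, is_branch b ->
           (0 <= liminf_branch u b)%E) :
  forall x : vertex m, 0 <= u x.
Proof.
move=> x0; rewrite leNgt; apply/negP => hx0.
have hm0 : (0 < m)%N by apply: leq_trans hm.
have [y [hy1 hy2]] := good_anc u x0.
have hyneg : u y < 0 by apply: le_lt_trans hx0.
have [f hf] := choice (exists_child hm0 u).
pose D k := iter k (fun z => f z :: z) y.
have inv k : u (D k) <= u y /\ goodv u (D k).
  elim: k => [|k [ih1 ih2]]; first by split.
  have h := good_avg hb0 hb1 hsuper ih2.
  have h' : u (D k.+1) <= u (D k) by apply: le_trans (hf (D k)) h.
  split; first exact: le_trans h' ih1.
  by right.
pose b n := if (n <= size y)%N then drop (size y - n) y else D (n - size y)%N.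
have bge n : (size y <= n)%N -> b n = D (n - size y)%N.
  rewrite /b => hn; case: ifP => // hn'.
  have -> : n = size y by apply/eqP; rewrite eqn_leq hn hn'.
  by rewrite subnn drop0.
have hbr : is_branch b.
  split; first by rewrite /b leq0n subn0 drop_size.
  move=> n; case: (ltnP n (size y)) => hn.
    have i0 : 'I_m := Ordinal hm0.
    exists (nth i0 y (size y - n.+1)%N).
    rewrite /b hn ltnW // /succ (@drop_nth _ i0); last first.
      by rewrite subnSK // leq_subr.
    by rewrite subnSK.
  exists (f (D (n - size y)%N)).
  by rewrite bge ?(leqW hn) // bge // subSn.
have := hbd b hbr; rewrite /liminf_branch limn_einf_lim => hl.
have : (limn (einfs (fun n => (u (b n))%:E)) <= (u y)%:E)%E.
  apply: lime_le; first exact: is_cvg_einfs.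
  exists (size y) => // n /= hn.
  apply: (@le_trans _ _ (u (b n))%:E).
    by apply: ereal_inf_lbound; exists n => /=.
  by rewrite lee_fin bge //; case: (inv (n - size y)%N).
move=> /(le_trans hl); rewrite lee_fin leNgt hyneg //.
Qed.

Unset Implicit Arguments.
Theorem theorem2p1 (R : realType) (m : nat) (hm : (2 <= m)%N) (beta : R)
  (hb0 : 0 <= beta) (hb1 : beta < 1) (u : vertex m -> R)
  (hsuper : forall x : vertex m, 0 <= - @Delta R m beta u x)
  (hbd : forall b : nat -> vertex m, is_branch b ->
           (0 <= liminf_branch u b)%E) :
  (forall x : vertex m, 0 <= u x) /\
  (0 < beta ->
     (forall x : vertex m, 0 < u x) \/ (forall x : vertex m, u x = 0)).
Proof.
have pos := part1 hm hb0 hb1 hsuper hbd.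
split => // bpos.
have hm0 : (0 < m)%N by apply: leq_trans hm.
have minv : 0 < (m%:R : R)^-1 by rewrite invr_gt0 ltr0n.
have avg0 x : 0 <= (m%:R)^-1 * \sum_(i < m) u (i :: x).
  by apply: mulr_ge0; [exact: ltW | apply: sumr_ge0 => i _; exact: pos].
have up a x : u (a :: x) = 0 -> u x = 0.
  move=> h; have := super_node hb0 hb1 hsuper a x; rewrite h => h2.
  have := avg0 (a :: x); have := pos x => h3 h4.
  apply/eqP; rewrite eq_le h3 andbT.
  have : beta * u x <= 0 by nra.
  by rewrite pmulr_rle0.
have down x a : u x = 0 -> u (a :: x) = 0.
  move=> h.
  have h1 : (m%:R)^-1 * \sum_(i < m) u (i :: x) <= 0.
    case: x h => [|c x] h; first by rewrite -[X in _ <= X]h; exact: (super_root hsuper).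
    have := super_node hb0 hb1 hsuper c x; rewrite h => h2.
    have := pos x => h3; have := avg0 (c :: x) => h4.
    have h5 : (1 - beta) * ((m%:R)^-1 * \sum_(i < m) u [:: i, c & x]) <= 0 by nra.
    by rewrite pmulr_rle0 ?subr_gt0 in h5.
  rewrite pmulr_rle0 // in h1.
  have h2 : u (a :: x) <= \sum_(i < m) u (i :: x).
    by rewrite (bigD1 a) //= lerDl; apply: sumr_ge0 => i _; exact: pos.
  by apply/eqP; rewrite eq_le pos andbT (le_trans h2 h1).
case: (pselect (exists x, u x = 0)) => [[x0 hx0]|H]; [right|left].
  have r0 : u [::] = 0.
    by elim: x0 hx0 => [//|a x ih] /up.
  by elim => [//|a x ih]; apply: down.
move=> x; rewrite lt_neqAle pos andbT; apply/eqP => h; apply: H; by exists x.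
Qed.
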